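(* Let $\mathscr{P}$ be a topological property which is closed hereditary, co-local, and preserved under finite closed sums. A locally connected Hausdorff space $X$ having $\mathscr{P}$ has a Hausdorff one-point connectification having $\mathscr{P}$ if and only if $X$ has no almost compact component.
   Context: A one-point connectification of a space $X$ is a connected space $Y$ which contains $X$ as a dense subspace and such that $Y\setminus X$ is a singleton. A space $X$ is almost compact if for every open cover $\mathscr{U}$ of $X$ there is a finite subcollection $\mathscr{V}\subseteq\mathscr{U}$ with $X=\mathrm{cl}_X\bigcup\mathscr{V}$. A topological property $\mathscr{P}$ is: closed hereditary if every closed subspace of a space with $\mathscr{P}$ has $\mathscr{P}$; preserved under finite closed sums if every space which is a finite union of closed subspaces each having $\mathscr{P}$ has $\mathscr{P}$; co-local if a space $X$ has $\mathscr{P}$ whenever there are a point $p\in X$ and an open base $\mathfrak{B}$ at $p$ such that $X\setminus B$ has $\mathscr{P}$ for every $B\in\mathfrak{B}$. *)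

(* Defs.v *)
From HB Require Import structures.
From mathcomp Require Import all_boot all_order all_algebra.
From mathcomp Require Import all_classical all_reals all_analysis.
Set Implicit Arguments. Unset Strict Implicit. Unset Printing Implicit Defensive.
Local Open Scope classical_set_scope.

(* A topological property: any predicate on topological spaces; subspaces of a
   space T on a set A are the sigma types [set_type A] with the subspace
   (initial) topology provided by MathComp-Analysis. *)

Definition homeomorphism (S T : topologicalType) (f : S -> T) : Prop :=
  exists g : T -> S, [/\ cancel f g, cancel g f, continuous f & continuous g].

Definition topological_property (P : topologicalType -> Prop) : Prop :=
  forall (S T : topologicalType) (f : S -> T), homeomorphism f -> P S -> P T.

Definition closed_hereditary (P : topologicalType -> Prop) : Prop :=
  forall (T : topologicalType) (A : set T), closed A -> P T -> P (set_type A).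

Definition finite_closed_sums (P : topologicalType -> Prop) : Prop :=
  forall (T : topologicalType) (F : set (set T)),
    finite_set F ->
    (forall A, F A -> closed A) ->
    (forall A, F A -> P (set_type A)) ->
    \bigcup_(A in F) A = [set: T] ->
    P T.

Definition open_base_at (T : topologicalType) (p : T) (B : set (set T)) : Prop :=
  (forall b, B b -> open b /\ b p) /\
  (forall U, nbhs p U -> exists2 b, B b & b `<=` U).

Definition co_local (P : topologicalType -> Prop) : Prop :=
  forall (T : topologicalType) (p : T) (B : set (set T)),
    open_base_at p B ->
    (forall b, B b -> P (set_type (~` b))) ->
    P T.

Definition locally_connected_space (T : topologicalType) : Prop :=
  forall (x : T) (U : set T), nbhs x U ->
    exists V : set T, [/\ open V, V x, connected V & V `<=` U].

Definition almost_compact (T : topologicalType) : Prop :=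
  forall U : set (set T),
    (forall A, U A -> open A) -> \bigcup_(A in U) A = [set: T] ->
    exists V : set (set T),
      [/\ V `<=` U, finite_set V & closure (\bigcup_(A in V) A) = [set: T]].

Definition embedding (X Y : topologicalType) (f : X -> Y) : Prop :=
  [/\ injective f, continuous f &
      forall U : set X, open U -> exists2 V : set Y, open V & f @` U = range f `&` V].

Definition one_point_connectification (X Y : topologicalType) (e : X -> Y) : Prop :=
  [/\ embedding e, connected [set: Y], dense (range e) &
      exists y : Y, ~` range e = [set y]].

(* Main.v *)
Require Import Defs.
From HB Require Import structures.
From mathcomp Require Import all_boot all_order all_algebra.
From mathcomp Require Import all_classical all_reals all_analysis.
From mathcomp Require Import finmap.
Local Open Scope classical_set_scope.
Set Implicit Arguments. Unset Strict Implicit. Unset Printing Implicit Defensive.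
Lemma fin_open_inter (T : topologicalType) (p : T) (I : choiceType) (V : set I)
  (Q : I -> set T -> Prop) :
  finite_set V -> (forall i, V i -> exists B, [/\ open B, B p & Q i B]) ->
  exists N, [/\ open N, N p & forall i, V i -> exists B, Q i B /\ N `<=` B].
Proof.
move=> /finite_fsetP [S ->] H.
suff: forall s : seq I, {subset s <= S} -> exists N, [/\ open N, N p &
    forall i, i \in s -> exists B, Q i B /\ N `<=` B].
  by move=> /(_ S (fun _ h => h)) [N [oN Np HN]]; exists N; split => // i /= iS; apply: HN.
elim=> [|a s IH] sub.
  by exists setT; split => //; exact: openT.
have [|N [oN Np HN]] := IH; first by move=> i iS; apply: sub; rewrite in_cons iS orbT.
have [B [oB Bp QB]] := H a (sub a (mem_head a s)).
exists (N `&` B); split => //; first exact: openI.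
move=> i; rewrite in_cons => /orP [/eqP -> | iS].
  by exists B; split => // y [].
by have [B' [QB' NB']] := HN i iS; exists B'; split => // y [/NB'].
Qed.

Lemma comp_open (X : topologicalType) : locally_connected_space X ->
  forall x : X, open (connected_component [set: X] x).
Proof.
move=> lc x; rewrite openE => y Cy.
have [V [oV Vy cV _]] := lc y setT filterT.
have VC : V `<=` connected_component setT x.
  rewrite (same_connected_component Cy).
  exact: connected_component_max.
apply: filterS VC _; exact: open_nbhs_nbhs.
Qed.

Definition ACX (X : topologicalType) (C : set X) :=
  forall U : set (set X), (forall A, U A -> open A) -> C `<=` \bigcup_(A in U) A ->
  exists V : set (set X), [/\ V `<=` U, finite_set V & C `<=` closure (\bigcup_(A in V) A)].

Lemma AC_ACX (X : topologicalType) (C : set X) :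
  almost_compact (set_type C) -> ACX C.
Proof.
move=> AC U oU cov.
pose pre (A : set X) : set (set_type C) := sval @^-1` A.
have h1 : forall A, [set pre A | A in U] A -> open A.
  by move=> _ [A UA <-]; exists A => //; exact: oU.
have h2 : \bigcup_(A in [set pre A | A in U]) A = [set: set_type C].
  apply/seteqP; split => // -[c hc] _.
  have [A UA Ac] := cov c (set_mem hc).
  by exists (pre A) => //; exists A.
have [V' [V'sub finV' clV']] := AC _ h1 h2.
pose g (W : set (set_type C)) := xget setT [set A | U A /\ pre A = W].
have gP W : V' W -> U (g W) /\ pre (g W) = W.
  move=> /V'sub [A UA <-]; rewrite /g.
  have := @xgetPex _ setT [set A0 | U A0 /\ pre A0 = pre A].
  by apply; exists A.
exists (g @` V'); split.
- by move=> _ [W V'W <-]; case: (gP W V'W).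
- exact: finite_image.
- move=> c Cc B; rewrite nbhsE; case=> Ob [oO Oc] OB.
  pose c' : set_type C := exist _ c (mem_set Cc).
  have : closure (\bigcup_(A in V') A) c' by rewrite clV'.
  case/(_ (pre Ob)).
    by apply: open_nbhs_nbhs; split => //; exists Ob.
  move=> w [[W V'W Ww] Ow].
  exists (sval w); split; last exact: OB.
  exists (g W); first by exists W.
  by case: (gP W V'W) => _ E; rewrite -E in Ww; exact: Ww.
Qed.

Lemma ACX_AC (X : topologicalType) (C : set X) : open C ->
  ACX C -> almost_compact (set_type C).
Proof.
move=> oC ACXC U' oU' cov'.
pose pre (A : set X) : set (set_type C) := sval @^-1` A.
have h1 : forall A, [set Ob | open Ob /\ U' (pre Ob)] A -> open A by move=> A [].
have h2 : C `<=` \bigcup_(A in [set Ob | open Ob /\ U' (pre Ob)]) A.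
  move=> c Cc.
  pose c' : set_type C := exist _ c (mem_set Cc).
  have : (\bigcup_(A in U') A) c' by rewrite cov'.
  case=> W U'W Wc'.
  case: (oU' W U'W) => Ob oO OW.
  have E : pre Ob = W := OW.
  exists Ob; first by split => //; rewrite E.
  by rewrite -E in Wc'.
have [V [Vsub finV clV]] := ACXC _ h1 h2.
exists [set pre Ob | Ob in V]; split.
- by move=> _ [Ob VO <-]; case: (Vsub Ob VO).
- exact: finite_image.
- apply/seteqP; split => // c' _ B; rewrite nbhsE; case=> D [oD Dc'] DB.
  case: oD => Ob' oO' DO0; have DO' : pre Ob' = D := DO0.
  have Cc : C (sval c') by apply: set_mem; exact: (svalP c').
  have : closure (\bigcup_(A in V) A) (sval c') by exact: clV.
  case/(_ (Ob' `&` C)).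
    apply: open_nbhs_nbhs; split; first exact: openI.
    by split => //; rewrite -DO' in Dc'.
  move=> w [[Ob VO Ow] [Ob'w Cw]].
  pose w' : set_type C := exist _ w (mem_set Cw).
  exists w'; split.
    by exists (pre Ob) => //; exists Ob.
  by apply: DB; rewrite -DO'.
Qed.

Lemma forward (X Y : topologicalType) (e : X -> Y) :
  locally_connected_space X -> one_point_connectification e -> hausdorff_space Y ->
  ~ (exists x : X, almost_compact (set_type (connected_component [set: X] x))).
Proof.
move=> lc [[einj econt eopen] conY _ [p hp]] hY [x ACx].
set C := connected_component [set: X] x.
have oC : open C := comp_open lc x.
have cC : closed C := @component_closed _ setT x closedT.
have ACXC := AC_ACX ACx.
have ep z : e z <> p.
  move=> ezp; have H : (~` range e) p by rewrite hp.
  by apply: H; exists z.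
have rp y : y <> p -> exists z, e z = y.
  move=> yp; apply: contrapT => nz; have : (~` range e) y.
    by move=> [z _ ezy]; apply: nz; exists z.
  by rewrite hp.
pose D := e @` C.
have Cx : C x by exact: connected_component_refl.
have DT : D = setT.
  apply: conY.
  - by exists (e x); exists x.
  - have [V oV EV] := eopen C oC.
    exists (range e `&` V); last by rewrite setTI.
    apply: openI => //.
    have -> : range e = ~` [set p] by rewrite -hp setCK.
    apply: closed_openC; apply: accessible_closed_set1.
    exact: hausdorff_accessible.
  - exists D; last by rewrite setTI.
    move=> y clDy.
    have [yp|ynp] := pselect (y = p); last first.
      have [z ezy] := rp y ynp; subst y.
      have [Cz|nCz] := pselect (C z); first by exists z.
      have [W oW EW] := eopen (~` C) (closed_openC cC).
      have [_ [[c Cc <-] Wec]] : (D `&` W) !=set0.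
        apply: clDy; apply: open_nbhs_nbhs; split => //.
        have : (e @` (~` C)) (e z) by exists z.
        by rewrite EW => -[].
      have : (e @` (~` C)) (e c) by rewrite EW; split => //; exists c.
      by case=> c' nCc' /einj ecc; subst c'.
    subst y; exfalso.
    pose Uc := [set e @^-1` A | A in [set A | open A /\ exists B, [/\ open B, B p & A `&` B = set0]]].
    have oUc : forall A, Uc A -> open A.
      move=> _ [A [oA _] <-]; exact: (proj1 (continuousP e) econt).
    have covUc : C `<=` \bigcup_(A in Uc) A.
      move=> c Cc; have : e c != p by apply/eqP; exact: ep.
      have hY' := hY; rewrite open_hausdorff in hY'.
      move/hY' => [[A B] /= [ecA pB] [oA oB /eqP AB]].
      exists (e @^-1` A); last by apply: set_mem.
      by exists A => //; split => //; exists B; split => //; apply: set_mem.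
    have [V [VUc finV clV]] := ACXC Uc oUc covUc.
    have [|N [oN Np HN]] := @fin_open_inter Y p _ V
       (fun U B => exists A, U = e @^-1` A /\ A `&` B = set0) finV.
      move=> U /VUc [A [oA [B [oB Bp AB]]] <-].
      by exists B; split => //; exists A.
    have [_ [[c Cc <-] Nec]] : (D `&` N) !=set0.
      by apply: clDy; apply: open_nbhs_nbhs.
    have [w [[U VU Uw] Nw]] : (\bigcup_(A in V) A `&` (e @^-1` N)) !=set0.
      apply: (clV c Cc); apply: open_nbhs_nbhs; split => //.
      exact: (proj1 (continuousP e) econt).
    have [B [[A [UA AB]] NB]] := HN U VU.
    have : (A `&` B) (e w) by split; [rewrite UA in Uw | apply: NB].
    by rewrite AB.
have : D p by rewrite DT.
by case=> z _ /ep.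
Qed.

Record admT (X : topologicalType) := AdmT {
  adm : set X -> Prop;
  adm0 : adm set0;
  admU : forall A B, adm A -> adm B -> adm (A `|` B);
  admC : forall A, adm A -> closed A }.

Definition opcon (X : topologicalType) (a : admT X) : Type := option X.

HB.instance Definition _ (X : topologicalType) (a : admT X) := Choice.on (opcon a).

Definition opc_nbhs (X : topologicalType) (a : admT X) (x : opcon a) : set_system (opcon a) :=
  if x is Some x' then Some @ nbhs x' else
    filter_from (adm a) (fun K => (Some @` (~` K)) `|` [set None]).

Lemma opc_filter (X : topologicalType) (a : admT X) (x : opcon a) :
  ProperFilter (opc_nbhs x).
Proof.
case: x => [x|]; first exact: fmap_proper_filter.
apply: filter_from_proper; last by move=> ? _; exists None; right.
apply: filter_from_filter; first by exists set0; exact: adm0.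
move=> P Q aP aQ; exists (P `|` Q); first exact: admU.
case=> [x [|//]|[] //= _]; [|by split; right..].
by move=> [y /not_orP[Py Qy]] [<-{x}]; split => //; left; exists y.
Qed.

Lemma opc_singleton (X : topologicalType) (a : admT X) (x : opcon a) U :
  opc_nbhs x U -> U x.
Proof. by case: x => [x' /= /nbhs_singleton//|[W _]]; apply; right. Qed.

Lemma opc_nbhs_nbhs (X : topologicalType) (a : admT X) (p : opcon a) (A : set (opcon a)) :
  opc_nbhs p A -> opc_nbhs p ((@opc_nbhs X a)^~ A).
Proof.
case: p => [r /=|].
  rewrite nbhs_simpl nbhsE => -[U [oU Ur] USA/=].
  by exists U => //= z /=; rewrite nbhs_simpl nbhsE => Uz; exists U.
case=> C aC nCA /=; exists C; first exact: aC.
case=> [x|]; last by move=> _; exists C.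
move=> [[y nCy [<-]]|//] /=; rewrite nbhs_simpl nbhsE/=.
exists (~` C); first by split => //; exact: closed_openC (admC aC).
by move=> z /= nCz; apply: nCA; left; exists z.
Qed.

HB.instance Definition _ (X : topologicalType) (a : admT X) :=
  hasNbhs.Build (opcon a) (@opc_nbhs X a).

HB.instance Definition _ (X : topologicalType) (a : admT X) :=
  @Nbhs_isNbhsTopological.Build (opcon a)
  (@opc_filter X a) (@opc_singleton X a) (@opc_nbhs_nbhs X a).

Lemma opc_some_nbhs (X : topologicalType) (a : admT X) (x : X) (U : set X) :
  nbhs x U -> @nbhs _ (opcon a) (Some x) (Some @` U).
Proof. exact/filterS/preimage_image. Qed.

Lemma opc_some_continuous (X : topologicalType) (a : admT X) :
  continuous (Some : X -> opcon a).
Proof. by move=> x U. Qed.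

Lemma opc_open_some (X : topologicalType) (a : admT X) (U : set X) :
  open U -> @open (opcon a) (Some @` U).
Proof.
rewrite !openE/= => UU' _ [x /UU' Ux <-].
exact/opc_some_nbhs.
Qed.

Lemma opc_nbhs_None (X : topologicalType) (a : admT X) (U : set (opcon a)) :
  nbhs (None : opcon a) U <-> exists2 K, adm a K & Some @` (~` K) `|` [set None] `<=` U.
Proof. by []. Qed.

Lemma opc_hausdorff (X : topologicalType) (a : admT X) :
  hausdorff_space X -> (forall x : X, exists K, adm a K /\ nbhs x K) ->
  hausdorff_space (opcon a).
Proof.
move=> hsdfX Hs [x|] [y|] //=.
- move=> clxy; congr Some; apply: hsdfX => U V Ux Vy.
  have [] := clxy (Some @` U) (Some @` V).
    by apply: filterS Ux; exact: preimage_image.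
    by apply: filterS Vy; exact: preimage_image.
  by case=> [_|] [] /= [// p /[swap] -[] <- Up] [q /[swap] -[] -> Vp]; exists p.
- have [K [aK Kx]] := Hs x.
  case/(_ (Some @` K) (Some @` (~` K) `|` [set None])).
  + exact: opc_some_nbhs.
  + by exists K.
  + move=> w [[k Kk ek] [[k' nKk' ek'] | wN]].
      by rewrite -ek' in ek; case: ek => kk'; subst.
    by rewrite -ek in wN.
- have [K [aK Ky]] := Hs y.
  case/(_ (Some @` (~` K) `|` [set None]) (Some @` K)).
  + by exists K.
  + exact: opc_some_nbhs.
  + move=> w [[[k' nKk' ek'] | wN] [k Kk ek]].
      by rewrite -ek' in ek; case: ek => kk'; subst.
    by rewrite -ek in wN.
Qed.

Lemma opc_connected (X : topologicalType) (a : admT X) :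
  (forall K x, adm a K -> exists y, connected_component [set: X] x y /\ ~ K y) ->
  connected [set: opcon a].
Proof.
move=> Hm.
have key : forall B : set (opcon a), open B -> closed B -> B None -> B = setT.
  move=> B oB cB BN.
  have : nbhs (None : opcon a) B by move: oB; rewrite openE => oB'; exact: oB' None BN.
  case=> K aK KB.
  apply/seteqP; split => // -[z|] _ //.
  pose P := (Some : X -> opcon a) @^-1` B.
  have oP : open P := (proj1 (continuousP _) (@opc_some_continuous X a)) B oB.
  have cP : closed P.
    have -> : P = ~` ((Some : X -> opcon a) @^-1` (~` B)) by rewrite preimage_setC setCK.
    apply: open_closedC.
    exact: (proj1 (continuousP _) (@opc_some_continuous X a)) _ (closed_openC cB).
  have [y [Czy nKy]] := Hm K z aK.
  have Py : P y by apply: KB; left; exists y.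
  have E : connected_component setT z `&` P = connected_component setT z.
    apply: component_connected; [by exists y | by exists P | by exists P].
  have : (connected_component setT z `&` P) z.
    by rewrite E; exact: connected_component_refl.
  by case.
move=> B [b Bb] [Ob oO BE] [F cF BF].
have oB : open B by rewrite BE setTI.
have cB : closed B by rewrite BF setTI.
have [BN|BN] := pselect (B None); first exact: key.
have E : ~` B = setT by apply: key; [exact: closed_openC | exact: open_closedC | by []].
by have : (~` B) b by rewrite E.
Qed.

Lemma opc_dense (X : topologicalType) (a : admT X) (x0 : X) :
  (forall K x, adm a K -> exists y, connected_component [set: X] x y /\ ~ K y) ->
  dense (range (Some : X -> opcon a)).
Proof.
move=> Hm Ob [[z|] Oz] oO.
- by exists (Some z); split => //; exists z.
- have : nbhs (None : opcon a) Ob by move: oO; rewrite openE => oO'; exact: oO' None Oz.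
  case=> K aK KO.
  have [y [_ nKy]] := Hm K x0 aK.
  by exists (Some y); split; [apply: KO; left; exists y | exists y].
Qed.

Lemma opc_embedding (X : topologicalType) (a : admT X) :
  embedding (Some : X -> opcon a).
Proof.
split; [by move=> ? ? [] | exact: opc_some_continuous | ].
move=> U oU; exists (Some @` U); first exact: opc_open_some.
by rewrite setIidr //; move=> _ [u _ <-]; exists u.
Qed.

Lemma opc_compl (X : topologicalType) (a : admT X) :
  ~` range (Some : X -> opcon a) = [set None].
Proof.
apply/seteqP; split => [[z|] //= H | _ ->].
  by exfalso; apply: H; exists z.
by case.
Qed.

Lemma some_homeo (X : topologicalType) (a : admT X) (K : set X) (x0 : X) :
  exists f : set_type K -> set_type ((Some : X -> opcon a) @` K), homeomorphism f.
Proof.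
have fP (k : set_type K) : (Some (sval k) : opcon a) \in (Some @` K).
  by apply/mem_set; exists (sval k) => //; exact/set_mem/(svalP k).
pose f k : set_type ((Some : X -> opcon a) @` K) := exist _ (Some (sval k)) (fP k).
have gP (y : set_type ((Some : X -> opcon a) @` K)) : odflt x0 (sval y) \in K.
  case: y => y hy /=; move/set_mem: (hy) => [k Kk ky].
  by rewrite -ky /=; exact: mem_set.
pose g y : set_type K := exist _ (odflt x0 (sval y)) (gP y).
exists f, g; split.
- by move=> k; apply: val_inj.
- move=> y; apply: val_inj => /=; case: y => -[k|] //= h.
  by move/set_mem: h => [? _].
- apply/continuousP => _ [Ob oOb <-].
  exists (Some @^-1` Ob) => //.
  exact: (proj1 (continuousP _) (@opc_some_continuous X a)) _ oOb.
- apply/continuousP => _ [Ob oOb <-].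
  exists (Some @` Ob); first exact: opc_open_some.
  apply/seteqP; split => -[[k|] h] /=.
  + by case=> k' Ok' [e]; rewrite e in Ok'; exact: Ok'.
  + by case.
  + by move=> Ok; exists k.
  + by move/set_mem: (h) => [? _].
Qed.

Lemma opc_P (P : topologicalType -> Prop) (HPtop : topological_property P)
  (HPch : closed_hereditary P) (HPcl : co_local P)
  (X : topologicalType) (a : admT X) (HPX : P X) (x0 : X) : P (opcon a).
Proof.
apply: (HPcl _ (None : opcon a)
  [set b | exists K, adm a K /\ b = Some @` (~` K) `|` [set None]]).
- split.
  + move=> _ [K [aK ->]]; split; last by right.
    rewrite openE => -[z|] /=.
    * case => [[k nKk [<-]] | //].
      apply: (@filterS _ _ _ (~` K)); first by move=> w nKw; left; exists w.
      by apply: open_nbhs_nbhs; split => //; exact: closed_openC (admC aK).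
    * by move=> _; exists K.
  + move=> U [K aK KU]; exists (Some @` (~` K) `|` [set None]) => //; by exists K.
- move=> _ [K [aK ->]].
  have -> : ~` (Some @` (~` K) `|` [set None]) = (Some : X -> opcon a) @` K.
    apply/seteqP; split.
      move=> [z|] /= H; last by exfalso; apply: H; right.
      exists z => //; apply: contrapT => nKz; apply: H; left; by exists z.
    move=> _ [k Kk <-] [[k' nKk' [e]] | kn].
      by rewrite e in nKk'.
    by move: kn; rewrite /set1 /=.
  have [f hf] := some_homeo a K x0.
  exact: (HPtop _ _ f hf (HPch _ _ (admC aK) HPX)).
Qed.

Definition Bad (X : topologicalType) (S : set X) (U : set (set X)) : Prop :=
  [/\ forall A, U A -> open A, S `<=` \bigcup_(A in U) A &
      forall V, V `<=` U -> finite_set V -> ~ S `<=` closure (\bigcup_(A in V) A)].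

Definition Ucov (X : topologicalType) (S : set X) : set (set X) := xget set0 (Bad S).

Definition admX (X : topologicalType) (K : set X) : Prop := closed K /\ forall x : X,
  exists V, [/\ V `<=` Ucov (connected_component [set: X] x), finite_set V &
     K `&` connected_component [set: X] x `<=` closure (\bigcup_(A in V) A)].

Lemma admX0 (X : topologicalType) : admX (@set0 X).
Proof.
split; first exact: closed0.
by move=> x; exists set0; split => // ? [].
Qed.

Lemma admXU (X : topologicalType) (A B : set X) : admX A -> admX B -> admX (A `|` B).
Proof.
move=> [cA hA] [cB hB]; split; first exact: closedU.
move=> x; have [V1 [s1 f1 c1]] := hA x; have [V2 [s2 f2 c2]] := hB x.
exists (V1 `|` V2); split.
- by move=> U [/s1|/s2].
- by rewrite finite_setU.
- move=> y [[Ay|By] Cy].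
  + have := c1 y (conj Ay Cy); apply: closureS => z [U V1U Uz].
    by exists U => //; left.
  + have := c2 y (conj By Cy); apply: closureS => z [U V2U Uz].
    by exists U => //; right.
Qed.

Lemma admXC (X : topologicalType) (A : set X) : admX A -> closed A.
Proof. by case. Qed.

Definition aX (X : topologicalType) : admT X :=
  @AdmT X (@admX X) (@admX0 X) (@admXU X) (@admXC X).

Lemma Ucov_bad (X : topologicalType) : locally_connected_space X ->
  ~ (exists x : X, almost_compact (set_type (connected_component [set: X] x))) ->
  forall x, Bad (connected_component [set: X] x) (Ucov (connected_component [set: X] x)).
Proof.
move=> lc H x; apply: xgetPex.
apply: contrapT => nE; apply: H; exists x.
apply: (ACX_AC (comp_open lc x)) => U oU cU.
apply: contrapT => nV; apply: nE; exists U; split => // V VU fV CV.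
by apply: nV; exists V.
Qed.

Lemma admX_meet (X : topologicalType) : locally_connected_space X ->
  ~ (exists x : X, almost_compact (set_type (connected_component [set: X] x))) ->
  forall K x, admX K -> exists y, connected_component [set: X] x y /\ ~ K y.
Proof.
move=> lc H K x [_ hK]; have [V [VU fV KC]] := hK x.
have [_ _ bad] := Ucov_bad lc H x.
apply: contrapT => ne; apply: (bad V VU fV) => y Cy.
apply: KC; split => //; apply: contrapT => nKy; apply: ne; by exists y.
Qed.

Lemma admX_sep (X : topologicalType) : locally_connected_space X ->
  ~ (exists x : X, almost_compact (set_type (connected_component [set: X] x))) ->
  forall z : X, exists K, admX K /\ nbhs z K.
Proof.
move=> lc H z.
have [oU covU _] := Ucov_bad lc H z.
have Czz : connected_component [set: X] z z by exact: connected_component_refl.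
have [U UU Uz] := covU z Czz.
exists (closure (U `&` connected_component [set: X] z)); split.
- split; first exact: closed_closure.
  move=> x; have [E|NE] := pselect (connected_component [set: X] x = connected_component [set: X] z).
  + exists [set U]; split.
    * by move=> _ ->; rewrite E.
    * exact: finite_set1.
    * move=> y [+ _]; rewrite bigcup_set1; apply: closureS; by move=> w [].
  + exists set0; split => //.
    move=> y [cly Cxy]; exfalso; apply: NE.
    have cC : closed (connected_component [set: X] z) := @component_closed _ setT z closedT.
    have Czy : connected_component [set: X] z y.
      by apply: cC; apply: (closureS _ cly) => w [].
    by rewrite (same_connected_component Cxy) (same_connected_component Czy).
- apply: (@filterS _ _ _ (U `&` connected_component [set: X] z)); first exact: subset_closure.
  apply: open_nbhs_nbhs; split; last by split.
  exact: openI (oU U UU) (comp_open lc z).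
Qed.

Unset Implicit Arguments.
Set Strict Implicit.

Theorem theorem2p12 (P : topologicalType -> Prop)
  (HPtop : topological_property P)
  (HPch : closed_hereditary P) (HPcl : co_local P) (HPfs : finite_closed_sums P)
  (X : topologicalType) (HXne : [set: X] !=set0)
  (HXlc : locally_connected_space X) (HXh : hausdorff_space X) (HPX : P X) :
  (exists (Y : topologicalType) (e : X -> Y),
      [/\ one_point_connectification e, hausdorff_space Y & P Y]) <->
  ~ (exists x : X, almost_compact (set_type (connected_component [set: X] x))).
Proof.
split.
  by move=> [Y [e [opc hY _]]]; exact: (forward HXlc opc hY).
move=> H; have [x0 _] := HXne.
exists (opcon (aX X)), Some; split.
- split.
  + exact: (@opc_embedding X (aX X)).
  + exact: (@opc_connected X (aX X) (admX_meet HXlc H)).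
  + exact: (@opc_dense X (aX X) x0 (admX_meet HXlc H)).
  + by exists None; exact: (@opc_compl X (aX X)).
- exact: (@opc_hausdorff X (aX X) HXh (admX_sep HXlc H)).
- exact: (@opc_P P HPtop HPch HPcl X (aX X) HPX x0).
Qed.
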